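(* Assume $Q$ is connected. Each of the following conditions implies $L_{-1}=0$: (i) $Q$ has no loop; (ii) for every loop $a$ of $Q$ (arrow with $s(a)=t(a)$), the characteristic of $k$ does not divide the integer $m\ge2$ such that $a^m\in Z$ and $a^{m-1}\in B$; (iii) $k$ has characteristic $0$; (iv) $Z=Q_m$ for some $m\ge2$ (so $\Lambda=kQ/\langle Q_m\rangle$ is a truncated quiver algebra) and $Q$ is not the quiver with one vertex and one loop; (v) $Q$ is the quiver with one vertex and one loop, $Z=Q_m$ and the characteristic of $k$ does not divide $m\ge2$.
   Context: Let $k$ be an algebraically closed field and $Q$ a finite quiver; $Q_n$ is the set of paths of length $n$ ($Q_0$ vertices, $Q_1$ arrows), $s,t$ source and terminus. Let $Z$ be a minimal set of paths of length $\ge2$ (no proper subpath of an element of $Z$ lies in $Z$) with $\Lambda=kQ/\langle Z\rangle$ finite dimensional. $B$ is the set of paths (vertices included) not containing an element of $Z$ as a subpath. Paths are parallel if they have the same source and terminus; $Q_1//Q_0$ is the set of pairs $(a,e)$ with $a$ a loop at the vertex $e$, and $k(X//Y)$ is the vector space with basis the pairs of parallel paths in $X\times Y$. For a path $\varepsilon$ and a pair $(a,\gamma)$ of parallel paths with $a\in Q_1$, $\gamma\in B$, $\varepsilon^{(a,\gamma)}$ is the sum of all paths in $B$ obtained by replacing one occurrence of $a$ in $\varepsilon$ by $\gamma$ ($0$ if none), and $(\eta,\varepsilon^{(a,\gamma)})=\sum_i(\eta,\varepsilon_i)$ if $\varepsilon^{(a,\gamma)}=\sum_i\varepsilon_i$.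 $\psi_1:k(Q_1//B)\to k(Z//B)$ is $(a,\gamma)\mapsto\sum_{p\in Z}(p,p^{(a,\gamma)})$, and $L_{-1}:=k(Q_1//Q_0)\cap\operatorname{Ker}\psi_1$ (the degree $-1$ component of $\operatorname{H}^1(\Lambda,\Lambda)$). *)

(* Defs.v *)
From mathcomp Require Import all_boot all_order all_algebra.
Set Implicit Arguments. Unset Strict Implicit. Unset Printing Implicit Defensive.
Import GRing.Theory.


Record quiver := Quiver {
  qV : finType;
  qA : finType;
  src : qA -> qV;
  tgt : qA -> qV }.

(* Raw path data: (starting vertex, list of arrows a1 ... an, traversed in
   this order, so s(a1) = start and t(ai) = s(a(i+1))).  The trivial path at
   vertex e is (e, [::]). *)
Definition rawpath (Q : quiver) := (qV Q * seq (qA Q))%type.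

Definition is_path (Q : quiver) (p : rawpath Q) : bool :=
  match p.2 with
  | [::] => true
  | a :: l => (src a == p.1) && path (fun x y => tgt x == src y) a l
  end.

Definition source (Q : quiver) (p : rawpath Q) : qV Q := p.1.
Definition terminus (Q : quiver) (p : rawpath Q) : qV Q :=
  last p.1 [seq tgt a | a <- p.2].

Definition parallel (Q : quiver) (p q : rawpath Q) : bool :=
  (source p == source q) && (terminus p == terminus q).

Definition is_loop (Q : quiver) (a : qA Q) : bool := src a == tgt a.

Definition path_vertices (Q : quiver) (p : rawpath Q) : seq (qV Q) :=
  p.1 :: [seq tgt a | a <- p.2].

Definition subpath (Q : quiver) (z p : rawpath Q) : bool :=
  is_path z &&
  (if z.2 is [::] then z.1 \in path_vertices p else infix z.2 p.2).

Definition minimal_relations (Q : quiver) (Z : pred (rawpath Q)) : Prop :=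
  forall p, Z p ->
    [/\ is_path p, 2 <= size p.2 &
        forall z, subpath z p -> z != p -> ~~ Z z].

Definition inB (Q : quiver) (Z : pred (rawpath Q)) (p : rawpath Q) : Prop :=
  is_path p /\ forall z, Z z -> ~~ subpath z p.

(* Lambda = kQ/<Z> finite dimensional: B is finite. *)
Definition finite_B (Q : quiver) (Z : pred (rawpath Q)) : Prop :=
  exists s : seq (rawpath Q), forall p, inB Z p -> p \in s.

Definition connected_quiver (Q : quiver) : Prop :=
  forall u v : qV Q,
    connect (fun x y => [exists a : qA Q,
               ((src a == x) && (tgt a == y)) || ((src a == y) && (tgt a == x))])
            u v.

Definition replace_at (Q : quiver) (p : rawpath Q) (i : nat) (gamma : rawpath Q)
  : rawpath Q :=
  (p.1, take i p.2 ++ gamma.2 ++ drop i.+1 p.2).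

(* Coefficient of the path q in eps^(a,gamma): the number of occurrences of a
   in eps whose replacement by gamma yields q.  (Used only for q in B, so this
   is the coordinate of eps^(a,gamma) on the basis vector q.) *)
Definition occ_coef (Q : quiver) (eps : rawpath Q) (a : qA Q)
  (gamma : rawpath Q) (q : rawpath Q) : nat :=
  count (fun i => (nth a eps.2 i == a) && (replace_at eps i gamma == q))
        (iota 0 (size eps.2)).

(* An element of k(Q1//Q0) is given by its coefficients lam a on the basis
   vectors (a, s(a)) for loops a (lam vanishes off loops).  It lies in
   L_{-1} iff psi_1 of it vanishes, i.e. all its coordinates on the basis
   vectors (p, q) of k(Z//B) (p in Z, q in B, parallel) vanish. *)
Definition in_L_minus1 (k : fieldType) (Q : quiver) (Z : pred (rawpath Q))
  (lam : qA Q -> k) : Prop :=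
  (forall a, ~~ is_loop a -> lam a = 0%R) /\
  (forall p q : rawpath Q, Z p -> inB Z q -> parallel p q ->
     (\sum_(a : qA Q | is_loop a) lam a * (occ_coef p a (src a, [::]) q)%:R = 0)%R).

Definition Z_is_Qm (Q : quiver) (Z : pred (rawpath Q)) (m : nat) : Prop :=
  forall p, Z p = is_path p && (size p.2 == m).

Definition one_loop_quiver (Q : quiver) : Prop :=
  #|qV Q| = 1%N /\ #|qA Q| = 1%N.

(* Main.v *)
Require Import Defs.
From mathcomp Require Import all_boot all_order all_algebra zify.
From Stdlib Require Import Classical ClassicalEpsilon.
Set Implicit Arguments. Unset Strict Implicit.
Import GRing.Theory.
Local Open Scope ring_scope.

Lemma occ_zero (Q : quiver) (p q : rawpath Q) c x :
  (count_mem c q.2 + 1 != count_mem c p.2)%N -> occ_coef p c (x, [::]) q = 0%N.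
Proof.
move=> H; rewrite /occ_coef; apply/eqP; rewrite -leqn0 leqNgt -has_count.
apply/hasPn => i; rewrite mem_iota add0n => /andP[_ lti].
apply/negP => /andP[/eqP hn /eqP hr].
have E : p.2 = take i p.2 ++ c :: drop i.+1 p.2 by rewrite -hn -drop_nth // cat_take_drop.
move: H; rewrite -hr /replace_at /= [in X in _ != X]E !count_cat /= eqxx /=.
move=> /negP; apply; apply/eqP; lia.
Qed.

Lemma split_at (T : eqType) (s1 s2 : seq T) (y x0 : T) :
  [/\ nth x0 (s1 ++ y :: s2) (size s1) = y,
      take (size s1) (s1 ++ y :: s2) = s1 &
      drop (size s1).+1 (s1 ++ y :: s2) = s2].
Proof.
split.
- by rewrite nth_cat ltnn subnn.
- by rewrite take_size_cat.
- by rewrite -addn1 addnC -drop_drop drop_size_cat //= drop0.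
Qed.

Lemma occ_n (Q : quiver) (a : qA Q) v (u w : seq (qA Q)) n x :
  a \notin u -> a \notin w ->
  occ_coef (v, u ++ nseq n a ++ w) a (x, [::]) (v, u ++ nseq n.-1 a ++ w) = n.
Proof.
move=> au aw; rewrite /occ_coef /= !size_cat size_nseq !iotaD !count_cat add0n.
rewrite (@eq_in_count _ _ pred0 (iota 0 (size u))); last first.
  move=> i; rewrite mem_iota add0n => /andP[_ lti] /=.
  rewrite nth_cat lti; apply/negbTE; apply/negP => /andP[/eqP e _].
  by move: au; rewrite -e mem_nth.
rewrite (@eq_in_count _ _ pred0 (iota (size u + n) (size w))); last first.
  move=> i; rewrite mem_iota => /andP[h1 h2] /=.
  rewrite nth_cat.
  have -> : (i < size u)%N = false by apply/negbTE; rewrite -leqNgt; lia.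
  rewrite nth_cat size_nseq.
  have -> : (i - size u < n)%N = false by apply/negbTE; rewrite -leqNgt; lia.
  apply/negbTE; apply/negP => /andP[/eqP e _].
  move: aw; rewrite -e mem_nth //. change (i - size u - n < @size (qA Q) w)%N. lia.
rewrite (@eq_in_count _ _ predT (iota (size u) n)); last first.
  move=> i; rewrite mem_iota => /andP[h1 h2] /=.
  have [j [hj hjn]] : exists j, i = (size u + j)%N /\ (j < n)%N by exists (i - size u)%N; lia.
  rewrite hj.
  have -> : u ++ nseq n a ++ w = (u ++ nseq j a) ++ a :: (nseq (n - j.+1) a ++ w).
    have -> : nseq n a = nseq j a ++ nseq 1 a ++ nseq (n - j.+1) a.
      by rewrite -!nseqD; congr nseq; lia.
    by rewrite -!catA.
  have hs : (size u + j = size (u ++ nseq j a))%N by rewrite size_cat size_nseq.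
  rewrite hs.
  rewrite /replace_at /=.
  have [-> -> ->] := @split_at _ (u ++ nseq j a) (nseq (n - j.+1) a ++ w) a a.
  rewrite eqxx /= -catA [nseq j a ++ _]catA -nseqD; apply/eqP; do 3 f_equal; congr nseq; lia.
by rewrite !count_pred0 count_predT size_iota add0n addn0.
Qed.

Definition prel (Q : quiver) := fun x y : qA Q => tgt x == src y.

Lemma path_nseq (Q : quiver) (a : qA Q) x n : is_loop a ->
  path (fun x y : qA Q => tgt x == src y) x (nseq n a) = (n == 0)%N || (tgt x == src a).
Proof.
move=> la; elim: n x => [|n IH] x //=.
by rewrite IH (eqP la) eqxx orbT andbT.
Qed.

Lemma last_nseq_e (T : Type) (e : T) n : last e (nseq n e) = e.
Proof. by elim: n. Qed.

Lemma is_path_nseq (Q : quiver) (a : qA Q) n : is_loop a -> is_path (src a, nseq n a).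
Proof. by move=> la; case: n => //= n; rewrite /is_path /= eqxx path_nseq // (eqP la) eqxx orbT. Qed.

Lemma is_path_nseq_b (Q : quiver) (a b : qA Q) n : is_loop a -> src b = src a ->
  is_path (src a, nseq n a ++ [:: b]).
Proof.
move=> la sb; case: n => [|n]; rewrite /is_path /=; first by rewrite sb eqxx.
by rewrite eqxx cat_path path_nseq // last_nseq_e /= sb -(eqP la) eqxx orbT.
Qed.

Lemma is_path_b_nseq (Q : quiver) (a b : qA Q) n : is_loop a -> tgt b = src a ->
  is_path (src b, b :: nseq n a).
Proof. by move=> la tb; rewrite /is_path /= eqxx path_nseq // tb eqxx orbT. Qed.

Lemma Bshort (Q : quiver) (Z : pred (rawpath Q)) m (q : rawpath Q) :
  Z_is_Qm Z m -> (2 <= m)%N -> is_path q -> (size q.2 < m)%N -> inB Z q.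
Proof.
move=> HZ m2 qp qs; split=> // z; rewrite HZ => /andP[_ /eqP zs].
rewrite /subpath; case: z zs => zv [|c l] /= zs.
  by move: m2; rewrite -zs.
apply/negP => /andP[_ /size_infix]; move: qs zs => /=; lia.
Qed.

Lemma key (k : fieldType) (Q : quiver) (Z : pred (rawpath Q)) (lam : qA Q -> k)
  (a : qA Q) v (u w : seq (qA Q)) n :
  in_L_minus1 Z lam -> is_loop a -> (0 < n)%N -> a \notin u -> a \notin w ->
  Z (v, u ++ nseq n a ++ w) -> inB Z (v, u ++ nseq n.-1 a ++ w) ->
  parallel (v, u ++ nseq n a ++ w) (v, u ++ nseq n.-1 a ++ w) ->
  lam a * n%:R = 0.
Proof.
move=> [_ Heq] la n0 au aw Zp Bq par.
have E := Heq _ _ Zp Bq par.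
rewrite (bigD1 a) //= occ_n // big1 in E; first by rewrite addr0 in E.
move=> c /andP[lc nca].
rewrite occ_zero ?mulr0 //.
have nac : (a == c) = false by rewrite eq_sym (negbTE nca).
rewrite /= !count_cat !count_nseq /= nac !mul0n.
apply/eqP; lia.
Qed.

Lemma natr_neq0 (k : fieldType) m : (0 < m)%N ->
  (forall p, p \in [pchar k] -> ~~ (p %| m)%N) -> (m%:R : k) != 0.
Proof.
move=> m0 H; apply/negP => h; have [p pp] := natf0_pchar m0 h.
by move: (H p pp); rewrite (dvdn_pcharf pp) h.
Qed.

Lemma exists_m (Q : quiver) (Z : pred (rawpath Q)) (a : qA Q) :
  minimal_relations Z -> finite_B Z -> is_loop a ->
  exists m, [/\ (2 <= m)%N, Z (src a, nseq m a) & inB Z (src a, nseq m.-1 a)].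
Proof.
move=> Hmin [s Hs] la.
pose f n : rawpath Q := (src a, nseq n a).
have fP n : is_path (f n) by apply: is_path_nseq.
pose P n := if excluded_middle_informative (inB Z (f n)) then false else true.
have PP n : reflect (~ inB Z (f n)) (P n).
  by rewrite /P; case: excluded_middle_informative => h; constructor.
have exP : exists n, P n.
  apply: NNPP => hn.
  have allB n : inB Z (f n) by apply: NNPP => h; apply: hn; exists n; apply/PP.
  have : ((size s).+1 <= size s)%N.
    have := @uniq_leq_size _ (map f (iota 0 (size s).+1)) s.
    rewrite size_map size_iota; apply.
    - rewrite map_inj_uniq ?iota_uniq // => i j /(congr1 (fun p => size p.2)) /=.
      by rewrite !size_nseq.
    - by move=> p /mapP [i _ ->]; apply: Hs.
  by rewrite ltnn.
case: (ex_minnP exP) => n0 /PP nB min0.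
have [z [Zz sz]] : exists z, Z z /\ subpath z (f n0).
  apply: NNPP => hz; apply: nB; split; first exact: fP.
  move=> z Zz; apply/negP => sz; apply: hz; exists z; done.
have [zp z2 _] := Hmin _ Zz.
move: Zz sz zp z2; case: z => zv zl Zz sz zp z2.
move: sz; rewrite /subpath zp /=.
case E: zl z2 => [|c l] //= z2 inf.
have allz : all (pred1 a) zl.
  by apply/allP => x; rewrite E => /(mem_infix inf); rewrite mem_nseq; case/andP.
move/all_pred1P: allz => zlE.
have ca : c = a by move: zlE; rewrite E /= => -[].
have zvE : zv = src a by move: zp; rewrite /is_path E /= ca => /andP[/eqP <- _].
have zle : (size zl <= n0)%N by rewrite E; move/size_infix: inf; rewrite size_nseq.
have zf : (zv, zl) = f (size zl) by rewrite /f zvE -zlE.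
have Pz : P (size zl).
  apply/PP; rewrite -zf => -[_ H]; move: (H _ Zz); rewrite /subpath zp E /= eqxx prefix_refl.
  by [].
have zeq : size zl = n0 by have := min0 _ Pz; lia.
exists n0; split.
- by rewrite -zeq E.
- by rewrite -/(f n0) -zeq -zf.
- apply: NNPP => h; have : P n0.-1 by apply/PP.
  move/min0; rewrite -zeq E /=; lia.
Qed.

Theorem proposition3p2 (k : closedFieldType) (Q : quiver) (Z : pred (rawpath Q)) :
  connected_quiver Q ->
  minimal_relations Z ->
  finite_B Z ->
  ( (* (i) *) (forall a : qA Q, ~~ is_loop a)
    \/ (* (ii) *)
    (forall a : qA Q, is_loop a -> forall m : nat, (2 <= m)%N ->
       Z (src a, nseq m a) -> inB Z (src a, nseq m.-1 a) ->
       forall p : nat, p \in [pchar k] -> ~~ (p %| m)%N)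
    \/ (* (iii) *) [pchar k] =i pred0
    \/ (* (iv) *)
    (exists m : nat, (2 <= m)%N /\ Z_is_Qm Z m /\ ~ one_loop_quiver Q)
    \/ (* (v) *)
    (one_loop_quiver Q /\
     exists m : nat, [/\ (2 <= m)%N, Z_is_Qm Z m &
                        forall p : nat, p \in [pchar k] -> ~~ (p %| m)%N]) ) ->
  forall lam : qA Q -> k, in_L_minus1 Z lam -> forall a : qA Q, lam a = 0.
Proof.
move=> Hconn Hmin Hfin Hcase lam HL a.
have [Hnl _] := HL.
case la: (is_loop a); last by apply: Hnl; rewrite la.
have te : tgt a = src a by rewrite (eqP la).
have gen : forall m, (2 <= m)%N -> Z (src a, nseq m a) -> inB Z (src a, nseq m.-1 a) ->
    lam a * m%:R = 0.
  move=> m m2 Zm Bm.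
  have := @key k Q Z lam a (src a) [::] [::] m HL la.
  rewrite /= !cats0; apply => //; first by lia.
  by rewrite /parallel /source /terminus /= !map_nseq te !last_nseq_e eqxx.
have mul0 : forall m : nat, lam a * m%:R = 0 -> (m%:R : k) != 0 -> lam a = 0.
  move=> m h nz; apply/eqP; move/eqP: h; by rewrite mulf_eq0 (negbTE nz) orbF.
have viaB : forall m, (2 <= m)%N -> Z_is_Qm Z m ->
    Z (src a, nseq m a) /\ inB Z (src a, nseq m.-1 a).
  move=> m m2 HZ; split.
    by rewrite HZ is_path_nseq //= size_nseq eqxx.
  apply: (@Bshort _ _ _ _ HZ m2); first exact: is_path_nseq.
  by rewrite /= size_nseq; lia.
case: Hcase => [Hi|[Hii|[Hiii|[Hiv|Hv]]]].
- by move: (Hi a); rewrite la.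
- have [m [m2 Zm Bm]] := exists_m Hmin Hfin la.
  apply: (mul0 m (gen m m2 Zm Bm)); apply: natr_neq0; first by lia.
  exact: Hii a la m m2 Zm Bm.
- have [m [m2 Zm Bm]] := exists_m Hmin Hfin la.
  apply: (mul0 m (gen m m2 Zm Bm)); apply: natr_neq0; first by lia.
  by move=> p; rewrite Hiii.
- have [m [m2 [HZ nol]]] := Hiv.
  have [Zm Bm] := viaB m m2 HZ.
  have h1 := gen m m2 Zm Bm.
  have inc : forall c, (src c == src a) || (tgt c == src a) ->
      ~~ [exists b, (b != a) && ((src b == src a) || (tgt b == src a))] -> c = a.
    move=> c h nb; case: (eqVneq c a) => // nca; move/negP: nb; case.
    by apply/existsP; exists c; rewrite nca h.
  have h2 : lam a * (m.-1)%:R = 0.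
    case: (boolP [exists b, (b != a) && ((src b == src a) || (tgt b == src a))]); last first.
      move=> nb; exfalso; apply: nol.
      have ve : forall v, v = src a.
        move=> v; apply/eqP.
        have cl : closed (fun x y => [exists a0 : qA Q,
               ((src a0 == x) && (tgt a0 == y)) || ((src a0 == y) && (tgt a0 == x))])
                 (pred1 (src a)).
          move=> x y /existsP [c /orP [/andP [/eqP sc /eqP tc]|/andP [/eqP sc /eqP tc]]] /=.
          + apply/eqP/eqP => h.
            * have := inc c; rewrite sc h eqxx => /(_ isT nb) ca.
              by rewrite -tc ca te.
            * have := inc c; rewrite tc h eqxx orbT => /(_ isT nb) ca.
              by rewrite -sc ca.
          + apply/eqP/eqP => h.
            * have := inc c; rewrite tc h eqxx orbT => /(_ isT nb) ca.
              by rewrite -sc ca.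
            * have := inc c; rewrite sc h eqxx => /(_ isT nb) ca.
              by rewrite -tc ca te.
        by have := closed_connect cl (Hconn (src a) v); rewrite !inE eqxx => <-.
      split; apply/eqP/card1P.
        by exists (src a) => v; rewrite !inE (ve v) eqxx.
      exists a => c; rewrite !inE; apply/idP/eqP => // _.
      by apply: inc nb; rewrite (ve (src c)) eqxx.
    move=> /existsP [b /andP [nba /orP [/eqP sb|/eqP tb]]].
    + have := @key k Q Z lam a (src a) [::] [:: b] m.-1 HL la.
      rewrite /=; apply.
      * by lia.
      * by [].
      * by rewrite inE eq_sym.
      * rewrite HZ is_path_nseq_b //= size_cat size_nseq /=; apply/eqP; lia.
      * apply: (@Bshort _ _ _ _ HZ m2); first exact: is_path_nseq_b.
        by rewrite /= size_cat size_nseq /=; lia.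
      * by rewrite /parallel /source /terminus /= !map_cat !last_cat /= !eqxx.
    + have := @key k Q Z lam a (src b) [:: b] [::] m.-1 HL la.
      rewrite /= !cats0; apply.
      * by lia.
      * by rewrite inE eq_sym.
      * by [].
      * rewrite HZ is_path_b_nseq //= size_nseq /=; apply/eqP; lia.
      * apply: (@Bshort _ _ _ _ HZ m2); first exact: is_path_b_nseq.
        by rewrite /= size_nseq /=; lia.
      * by rewrite /parallel /source /terminus /= !map_nseq te tb !last_nseq_e !eqxx.
  have -> : lam a = lam a * m%:R - lam a * (m.-1)%:R.
    rewrite -mulrBr -natrB; last by lia.
    by rewrite (_ : (m - m.-1)%N = 1%N) ?mulr1 //; lia.
  by rewrite h1 h2 subr0.
- have [_ [m [m2 HZ Hc]]] := Hv.
  have [Zm Bm] := viaB m m2 HZ.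
  apply: (mul0 m (gen m m2 Zm Bm)); apply: natr_neq0; first by lia.
  exact: Hc.
Qed.
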